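(* Let $G$ be a connected graph with $n$ vertices, let $1\le k\le n$, and let $B_n^{2\times k}$ be the graph obtained from two disjoint copies $G_{n,1}$ and $G_{n,2}$ of $G$ by adding $k$ distinct edges $e_1,\dots,e_k$, each of the form $e_i=(v_{i,1},v_{i,2})$ with $v_{i,1}$ a vertex of $G_{n,1}$ and $v_{i,2}$ a vertex of $G_{n,2}$. Then $$0 < \lambda_2(B_n^{2\times k}) \le \frac{2k}{n}.$$
   Context: All graphs are finite, simple and unweighted. For a graph $H$ with adjacency matrix $A$ and diagonal degree matrix $D$, the graph Laplacian is $L_H = D - A$, with eigenvalues ordered $0=\lambda_1 \le \lambda_2 \le \dots$; $\lambda_2(H)$ denotes the second smallest eigenvalue of $L_H$. *)

(* Defs.v *)
From HB Require Import structures.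
From mathcomp Require Import all_boot all_order all_algebra.
From mathcomp.real_closed Require Import polyrcf.
Set Implicit Arguments. Unset Strict Implicit. Unset Printing Implicit Defensive.
Import Order.TTheory GRing.Theory Num.Theory.
Local Open Scope ring_scope.

Definition simple_graph (V : finType) (e : rel V) : Prop :=
  symmetric e /\ irreflexive e.

Definition connected_graph (V : finType) (e : rel V) : Prop :=
  forall x y : V, connect e x y.

Definition degree (V : finType) (e : rel V) (x : V) : nat := #|[set y | e x y]|.

Definition laplacian (R : ringType) (V : finType) (e : rel V) : 'M[R]_#|V| :=
  \matrix_(i, j)
    ((if i == j then (degree e (enum_val i))%:R else 0)
       - (e (enum_val i) (enum_val j))%:R).

(* The eigenvalues of a square matrix over a real closed field, listed with
   algebraic multiplicity in nondecreasing order (only real eigenvalues are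
   listed; for a symmetric real matrix, such as a Laplacian, these are all). *)
Definition spectrum (R : rcfType) (m : nat) (A : 'M[R]_m) : seq R :=
  let p := char_poly A in
  sort <=%R (flatten [seq nseq (mup x p) x | x <- rootsR p]).

(* lambda_2: second smallest eigenvalue (index 1 in the 0-based list). *)
Definition lambda2 (R : rcfType) (V : finType) (e : rel V) : R :=
  (spectrum (laplacian R e))`_1.

(* B_n^{2 x k}: two disjoint copies (inl / inr) of the graph g, plus the
   cross edges {(inl u, inr v) | (u, v) \in E}. *)
Definition bridged (T : finType) (g : rel T) (E : {set T * T}) : rel (T + T) :=
  fun a b =>
    match a, b with
    | inl x, inl y => g x y
    | inr x, inr y => g x y
    | inl x, inr y => (x, y) \in E
    | inr y, inl x => (x, y) \in E
    end.

(* Main.v *)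
Require Import Defs.
From HB Require Import structures.
From mathcomp Require Import all_boot all_order all_algebra.
From mathcomp.real_closed Require Import polyrcf.
From mathcomp.real_closed Require Import complex.
From mathcomp Require Import ring.
Import Order.TTheory GRing.Theory Num.Theory.
Local Open Scope ring_scope.
Set Implicit Arguments. Unset Strict Implicit. Unset Printing Implicit Defensive.

Lemma count_enumT (T : finType) (P : pred T) : count P (enum T) = #|P|.
Proof. rewrite cardE -size_filter /enum_mem; congr size.
rewrite -filter_predI. apply: eq_filter => x /=. by rewrite andbT. Qed.

Lemma sorted2_le (R : realDomainType) (t : seq R) c :
  sorted <=%R t -> (1 < size t)%N ->
  (t`_1 <= c) = (1 < count (fun x : R => (x <= c)%R) t)%N.
Proof.
case: t => [|a [|b r]] //= /andP[ab]; rewrite le_path_sortedE => /andP[/allP rb _] _.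
case: (leP b c) => bc.
  by rewrite (le_trans ab bc).
have -> : count (fun x => x <= c) r = 0%N.
  apply/eqP; rewrite -leqn0 leqNgt -has_count; apply/hasP => -[x /rb bx xc].
  by have := lt_le_trans bc (le_trans bx xc); rewrite ltxx.
by case: (a <= c).
Qed.

Lemma mup_prod_XsubC {F : fieldType} (rs : seq F) x :
  mup x (\prod_(a <- rs) ('X - a%:P)) = count_mem x rs.
Proof.
elim: rs => [|a rs IH]; first by rewrite big_nil mupNroot // root1.
rewrite big_cons mupM ?polyXsubC_eq0 ?monic_neq0 ?monic_prod_XsubC //.
by rewrite IH -[('X - a%:P)]expr1 mup_XsubCX /= eq_sym; case: (x == a).
Qed.

Lemma flatten_mup_perm (R : rcfType) (rs : seq R) :
  perm_eq (flatten [seq nseq (mup x (\prod_(a <- rs) ('X - a%:P))) x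
                   | x <- rootsR (\prod_(a <- rs) ('X - a%:P))]) rs.
Proof.
set p := \prod_(a <- rs) _.
have p0 : p != 0 by rewrite monic_neq0 ?monic_prod_XsubC.
apply: perm_trans (perm_count_undup rs).
rewrite (eq_map (fun x => congr1 (nseq^~ x) (mup_prod_XsubC rs x))).
apply/perm_flatten/perm_map/uniq_perm.
- exact: uniq_roots.
- exact: undup_uniq.
move=> x; rewrite mem_undup -(roots_on_rootsR p0 x) root_prod_XsubC.
by rewrite itv_boundlr.

Qed.

Lemma sum_enum_val (R : nmodType) (V : finType) (F : V -> R) :
  \sum_(k < #|V|) F (enum_val k) = \sum_v F v.
Proof. by rewrite -big_enum_val. Qed.

Lemma degree_sum (R : ringType) (V : finType) (e : rel V) v :
  (degree e v)%:R = \sum_(k < #|V|) (e v (enum_val k))%:R :> R.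
Proof.
rewrite (sum_enum_val (fun y => (e v y)%:R)) -natr_sum /degree cardsE -sum1_card big_mkcond /=.
by congr (_%:R); apply: eq_bigr => y _; rewrite unfold_in; case: (e v y).
Qed.

Lemma char_poly_conj (F : fieldType) n (P D : 'M[F]_n) :
  P \in unitmx -> char_poly (invmx P *m D *m P) = char_poly D.
Proof.
move=> Pu; rewrite /char_poly /char_poly_mx !map_mxM.
set Pi := map_mx polyC (invmx P); set P' := map_mx polyC P.
have PP : Pi *m P' = 1%:M by rewrite -map_mxM mulVmx // map_mx1.
have EX : ('X%:M : 'M[{poly F}]_n) = Pi *m 'X%:M *m P'.
  by rewrite mul_mx_scalar -scalemxAl PP scale_scalar_mx mulr1.
rewrite {1}EX -mulmxBl -mulmxBr !det_mulmx mulrC mulrA -det_mulmx.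
have PP2 : P' *m Pi = 1%:M by rewrite -map_mxM mulmxV // map_mx1.
by rewrite PP2 det1 mul1r.
Qed.

Section SpecSection.
Local Open Scope sesquilinear_scope.

Section Spec.
Variable C : numClosedFieldType.

Definition qf n (A : 'M[C]_n) (x : 'rV[C]_n) := (x *m A *m x ^t*) 0 0.
Definition nrm n (x : 'rV[C]_n) := (x *m x ^t*) 0 0.

Lemma diag_form n (y d : 'rV[C]_n) :
  (y *m diag_mx d *m y ^t*) 0 0 = \sum_i d 0 i * (y 0 i * (y 0 i)^*).
Proof.
rewrite mul_mx_diag !mxE; apply: eq_bigr => i _; rewrite !mxE; ring.
Qed.

Lemma nrm_sum n (y : 'rV[C]_n) : nrm y = \sum_i y 0 i * (y 0 i)^*.
Proof. by rewrite /nrm !mxE; apply: eq_bigr => i _; rewrite !mxE. Qed.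

Lemma ct_mul m n p (X : 'M[C]_(m, n)) (Y : 'M[C]_(n, p)) :
  (X *m Y) ^t* = Y ^t* *m X ^t*.
Proof. by rewrite trmx_mul map_mxM. Qed.

Lemma spec_qf n (A P : 'M[C]_n) (d x : 'rV[C]_n) :
  P \is unitarymx -> A = invmx P *m diag_mx d *m P ->
  qf A x = \sum_i d 0 i * ((x *m invmx P) 0 i * ((x *m invmx P) 0 i)^*) /\
  nrm x = \sum_i (x *m invmx P) 0 i * ((x *m invmx P) 0 i)^*.
Proof.
move=> Pu ->; have Pun := unitarymx_unit Pu.
have E : (x *m invmx P) ^t* = P *m x ^t*.
  by rewrite ct_mul invmx_unitary // trmxCK.
split; first by rewrite -diag_form /qf E !mulmxA.
rewrite -[in RHS]nrm_sum /nrm E !mulmxA -[x *m _ *m P]mulmxA mulVmx //.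
by rewrite mulmx1.
Qed.

Lemma sum_gt n (y d : 'rV[C]_n) (c : C) :
  c \is Num.real -> (forall i, d 0 i \is Num.real) -> y != 0 ->
  (forall i, y 0 i != 0 -> c < d 0 i) ->
  c * (\sum_i y 0 i * (y 0 i)^*) < \sum_i d 0 i * (y 0 i * (y 0 i)^*).
Proof.
move=> cR dR /rV0Pn [i0 yi0] H; rewrite -subr_gt0 mulr_sumr -sumrB.
have ge0 : forall i, 0 <= d 0 i * (y 0 i * (y 0 i)^*) - c * (y 0 i * (y 0 i)^*).
  move=> i; rewrite -mulrBl; have [->|yi] := eqVneq (y 0 i) 0.
    by rewrite mul0r mulr0.
  by rewrite mulr_ge0 ?mul_conjC_ge0 // subr_ge0 ltW // H.
rewrite lt0r sumr_ge0 ?andbT; last by move=> i _; exact: ge0.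
rewrite psumr_neq0; last by move=> i _; exact: ge0.
apply/hasP; exists i0; first exact: mem_index_enum.
rewrite /= -mulrBl mulr_gt0 // ?subr_gt0 ?H //.
by rewrite lt0r mul_conjC_eq0 yi0 mul_conjC_ge0.
Qed.

Lemma sum_le n (y d : 'rV[C]_n) (c : C) :
  (forall i, y 0 i != 0 -> d 0 i <= c) ->
  \sum_i d 0 i * (y 0 i * (y 0 i)^*) <= c * (\sum_i y 0 i * (y 0 i)^*).
Proof.
move=> H; rewrite -subr_ge0 mulr_sumr -sumrB sumr_ge0 // => i _.
rewrite -mulrBl; have [->|yi] := eqVneq (y 0 i) 0; first by rewrite mul0r mulr0.
by rewrite mulr_ge0 ?mul_conjC_ge0 // subr_ge0 H.
Qed.


Lemma courantB n (A P : 'M[C]_n) (d : 'rV[C]_n) (c : C) (a b : 'rV[C]_n) :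
  P \is unitarymx -> A = invmx P *m diag_mx d *m P ->
  (forall i, d 0 i \is Num.real) -> c \is Num.real ->
  (forall al be : C, al *: a + be *: b = 0 -> al = 0 /\ be = 0) ->
  (forall al be : C, qf A (al *: a + be *: b) <= c * nrm (al *: a + be *: b)) ->
  (1 < #|[pred i | (d 0 i <= c)%R]|)%N.
Proof.
move=> Pu EA dR cR indep Hq; have Pun := unitarymx_unit Pu.
rewrite ltnNge; apply/negP => H1.
have key : forall al be : C, (al != 0) || (be != 0) ->
    (forall i, (al * (a *m invmx P) 0 i + be * (b *m invmx P) 0 i) != 0 -> c < d 0 i) -> False.
  move=> al be nz Hi.
  have [Eq En] := spec_qf (al *: a + be *: b) Pu EA.
  have Ey : (al *: a + be *: b) *m invmx P = \row_i (al * (a *m invmx P) 0 i + be * (b *m invmx P) 0 i).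
    by apply/rowP => i; rewrite mulmxDl -!scalemxAl !mxE.
  rewrite Ey in Eq En.
  have := Hq al be; rewrite Eq En; apply/negP; rewrite -real_ltNge; first last.
  - by apply: rpred_sum => i _; apply: realM => //; apply/ger0_real/mul_conjC_ge0.
  - by apply: realM => //; apply: rpred_sum => i _; apply/ger0_real/mul_conjC_ge0.
  apply: sum_gt => //.
  - apply/negP => /eqP Z.
    have : al *: a + be *: b = 0.
      by rewrite -[al *: a + _](mulmxKV Pun) Ey Z mul0mx.
    by move/indep => [a0 b0]; move: nz; rewrite a0 b0 eqxx.
  - by move=> i; rewrite mxE => /Hi.
case: (pickP [pred i | d 0 i <= c]) => [j /= dj | none].
  have other : forall i, i != j -> c < d 0 i.
    move=> i ij; rewrite real_ltNge //; apply/negP => di.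
    move: H1; rewrite leqNgt => /negP; apply; apply/card_gt1P.
    by exists i, j; rewrite !inE di dj ij.
  have [/andP[/eqP za /eqP zb]|nz] := boolP (((a *m invmx P) 0 j == 0) && ((b *m invmx P) 0 j == 0)).
    apply: (key 1 0); first by rewrite oner_eq0.
    move=> i; rewrite mul0r addr0 mul1r => yi; apply: other.
    by apply/eqP => eij; move: yi; rewrite eij za eqxx.
  apply: (key ((b *m invmx P) 0 j) (- (a *m invmx P) 0 j)).
    by rewrite oppr_eq0 orbC -negb_and.
  move=> i yi; apply: other; apply/eqP => eij; move: yi.
  by rewrite eij mulNr mulrC subrr eqxx.
apply: (key 1 0); first by rewrite oner_eq0.
move=> i _; rewrite real_ltNge //; apply/negP => di.
by have := none i; rewrite /= di.
Qed.


Lemma courantA n (A P : 'M[C]_n) (d : 'rV[C]_n) (c : C) (i j : 'I_n) :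
  P \is unitarymx -> A = invmx P *m diag_mx d *m P -> i != j ->
  d 0 i <= c -> d 0 j <= c ->
  exists w : 'rV[C]_n, [/\ w != 0, \sum_k w 0 k = 0 & qf A w <= c * nrm w].
Proof.
move=> Pu EA ij di dj; have Pun := unitarymx_unit Pu.
pose t k := \sum_l P k l.
have gen : forall al be : C, (al != 0) || (be != 0) -> al * t i + be * t j = 0 ->
    exists w : 'rV[C]_n, [/\ w != 0, \sum_k w 0 k = 0 & qf A w <= c * nrm w].
  move=> al be nz tz.
  pose y : 'rV[C]_n := \row_k ((k == i)%:R * al + (k == j)%:R * be).
  have yi : y 0 i = al by rewrite mxE eqxx (negbTE ij) mul1r mul0r addr0.
  have yj : y 0 j = be by rewrite mxE eqxx eq_sym (negbTE ij) mul1r mul0r add0r.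
  have yk : forall k, y 0 k != 0 -> (k == i) || (k == j).
    move=> k; rewrite mxE; case: (k == i); case: (k == j) => //=.
    by rewrite !mul0r addr0 eqxx.
  exists (y *m P); split.
  - apply/negP => /eqP Z; move: nz; rewrite -yi -yj.
    have -> : y = 0 by rewrite -(mulmxK Pun y) Z mul0mx.
    by rewrite !mxE eqxx.
  - transitivity (\sum_l y 0 l * t l).
      under eq_bigr => k _ do rewrite mxE.
      rewrite exchange_big /=; apply: eq_bigr => l _.
      by rewrite /t mulr_sumr.
    rewrite (bigD1 i) //= (bigD1 j) 1?eq_sym //= big1 ?addr0 ?yi ?yj ?addrA //.
    move=> k /andP[ki kj]; have : y 0 k == 0.
      by apply: contraTT isT => /yk; rewrite (negbTE ki) (negbTE kj).
    by move/eqP ->; rewrite mul0r.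
  - have [Eq En] := spec_qf (y *m P) Pu EA.
    rewrite Eq En mulmxK //; apply: sum_le => k /yk /orP[] /eqP -> //.
have [/andP[/eqP ti /eqP tj]|nz] := boolP ((t i == 0) && (t j == 0)).
  by apply: (gen 1 0); rewrite ?oner_eq0 // ti tj !mulr0 addr0.
apply: (gen (t j) (- t i)); first by rewrite oppr_eq0 orbC -negb_and.
by rewrite mulNr mulrC subrr.
Qed.


Definition lapmx N (E : rel 'I_N) : 'M[C]_N :=
  \matrix_(i, j) ((if i == j then \sum_k (E i k)%:R else 0) - (E i j)%:R).

Lemma qf_lap N (E : rel 'I_N) (x : 'rV[C]_N) :
  qf (lapmx E) x = \sum_i \sum_j ((E i j)%:R * (x 0 i * (x 0 i)^*)
                                   - (E i j)%:R * (x 0 i * (x 0 j)^*)).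
Proof.
rewrite /qf mxE.
under eq_bigr => j _ do rewrite !mxE mulr_suml.
rewrite exchange_big /=; apply: eq_bigr => i _.
rewrite sumrB.
have -> : \sum_j (E i j)%:R * (x 0 i * (x 0 i)^*) =
   (\sum_j (E i j)%:R) * (x 0 i * (x 0 i)^*) by rewrite mulr_suml.
under eq_bigr => j _ do rewrite !mxE mulrBr mulrBl.
rewrite sumrB; congr (_ - _).
  rewrite (bigD1 i) //= eqxx [X in _ + X]big1 ?addr0; first by rewrite mulrAC mulrC.
  by move=> j /negbTE; rewrite eq_sym => ->; rewrite mulr0 mul0r.
by apply: eq_bigr => j _; ring.
Qed.

Lemma lap_form N (E : rel 'I_N) (Esym : symmetric E) (x : 'rV[C]_N) :
  2 * qf (lapmx E) x =
  \sum_i \sum_j (E i j)%:R * ((x 0 i - x 0 j) * (x 0 i - x 0 j)^*).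
Proof.
rewrite qf_lap mulr2n mulrDl !mul1r.
transitivity (\sum_i \sum_j ((E i j)%:R * (x 0 i * (x 0 i)^*)
                                   - (E i j)%:R * (x 0 i * (x 0 j)^*)) +
  \sum_i \sum_j ((E i j)%:R * (x 0 j * (x 0 j)^*)
                                   - (E i j)%:R * (x 0 j * (x 0 i)^*))).
  congr (_ + _); rewrite exchange_big /=; apply: eq_bigr => i _.
  by apply: eq_bigr => j _; rewrite Esym.
rewrite -big_split; apply: eq_bigr => i _; rewrite -big_split.
by apply: eq_bigr => j _ /=; rewrite rmorphB; ring.
Qed.

Lemma lap_const N (E : rel 'I_N) (Esym : symmetric E) (x : 'rV[C]_N) :
  qf (lapmx E) x <= 0 -> forall i j, E i j -> x 0 i = x 0 j.
Proof.
move=> H i j Eij.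
have ge0 : forall i j, 0 <= (E i j)%:R * ((x 0 i - x 0 j) * (x 0 i - x 0 j)^*).
  by move=> i' j'; rewrite mulr_ge0 ?ler0n ?mul_conjC_ge0.
have S0 : \sum_i \sum_j (E i j)%:R * ((x 0 i - x 0 j) * (x 0 i - x 0 j)^*) = 0.
  apply/eqP; rewrite eq_le sumr_ge0 ?andbT; last first.
    by move=> i' _; apply: sumr_ge0 => j' _; exact: ge0.
  by rewrite -lap_form // pmulr_rle0 // ltr0n.
have ge0' : forall i', true -> 0 <= \sum_j (E i' j)%:R * ((x 0 i' - x 0 j) * (x 0 i' - x 0 j)^*).
  by move=> i' _; apply: sumr_ge0 => j' _; exact: ge0.
have := psumr_eq0P ge0' S0 (isT : true) (i := i).
move=> /(psumr_eq0P (fun j' _ => ge0 i j')) /(_ j isT) /eqP.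
by rewrite Eij mul1r mul_conjC_eq0 subr_eq0 => /eqP.
Qed.

End Spec.

End SpecSection.

Lemma connect_eqf (T : finType) (X : Type) (g : rel T) (f : T -> X) :
  (forall x y, g x y -> f x = f y) -> forall x y, connect g x y -> f x = f y.
Proof.
move=> H x y /connectP [p pth ->]; elim: p x pth => //= z p IH x /andP [gxz pth].
by rewrite (H _ _ gxz); exact: IH.
Qed.

Theorem theorem4p3 (R : rcfType) (T : finType) (g : rel T) (E : {set T * T})
    (k : nat) :
  simple_graph g -> connected_graph g ->
  #|E| = k -> (1 <= k)%N -> (k <= #|T|)%N ->
  0 < lambda2 R (bridged g E) /\
  lambda2 R (bridged g E) <= (2 * k)%:R / (#|T|)%:R.
Proof.
move=> [gsym girr] gconn Ek k1 kn.
set e := bridged g E.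
have esym : symmetric e.
  by move=> [x|x] [y|y] //=; rewrite /e /= gsym.
have [[u0 v0] uvE] : exists p, p \in E.
  by apply/card_gt0P; rewrite Ek.
pose N := #|{: T + T}|.
pose EI : rel 'I_N := fun i j => e (enum_val i) (enum_val j).
have EIsym : symmetric EI by move=> i j; rewrite /EI esym.
pose L : 'M[R[i]]_N := lapmx R[i] EI.
have LE : map_mx (real_complex R) (laplacian R e) = L.
  apply/matrixP => i j; rewrite !mxE rmorphB rmorph_nat; congr (_ - _).
  by case: eqP => _; rewrite ?rmorph0 // rmorph_nat degree_sum.
have Lh : L \is hermsymmx.
  apply: realsym_hermsym.
    apply/is_hermitianmxP; rewrite expr0 scale1r; apply/matrixP => i j.
    rewrite !mxE; case: (eqVneq i j) => [->|ij] //.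
    by rewrite /= EIsym.
  apply/mxOverP => i j; rewrite mxE; apply: rpredB; last exact: rpred_nat.
  by case: eqP => _; rewrite ?rpred0 //; apply: rpred_sum => k' _; apply: rpred_nat.
pose P := spectralmx L; pose d := spectral_diag L.
have Pu : P \is unitarymx by apply: spectral_unitarymx.
have LPd : L = invmx P *m diag_mx d *m P.
  by apply/orthomx_spectralP/hermitian_normalmx.
have dR : forall i, d 0 i \is Num.real.
  by move=> i; apply/mxOverP/hermitian_spectral_diag_real.
pose r i := complex.Re (d 0 i).
have dr : forall i, d 0 i = real_complex R (r i) by move=> i; rewrite /r (RRe_real (dR i)).
pose rs := [seq r i | i <- enum 'I_N].
have CP : char_poly (laplacian R e) = \prod_(a <- rs) ('X - a%:P).
  apply: (@map_poly_inj _ _ (real_complex R)).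
  rewrite map_char_poly LE LPd char_poly_conj ?spectral_unit //.
  rewrite char_poly_trig ?diag_mx_is_trig // rmorph_prod big_map big_enum /=.
  by apply: eq_bigr => i _; rewrite map_polyXsubC mxE eqxx mulr1n dr.
have spec_perm : perm_eq (spectrum (laplacian R e)) rs.
  by rewrite /spectrum perm_sort CP; apply: flatten_mup_perm.
have sorted_spec : sorted <=%R (spectrum (laplacian R e)).
  by apply: sort_sorted; exact: le_total.
have T0 : (0 < #|T|)%N by apply: leq_trans kn.
have size_spec : (1 < size (spectrum (laplacian R e)))%N.
  rewrite (perm_size spec_perm) size_map size_enum_ord /N card_sum.
  exact: (leq_add T0 T0).
have cnt : forall c : R, count (fun x => x <= c) (spectrum (laplacian R e))
    = #|[pred i | (d 0 i <= real_complex R c)%R]|.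
  move=> c; rewrite (permP spec_perm) count_map count_enumT.
  by apply: eq_card => i; rewrite !inE /= dr lecR.
have wconst : forall w : 'rV[R[i]]_N, (forall i j, EI i j -> w 0 i = w 0 j) ->
    forall i, w 0 i = w 0 (enum_rank (inl u0 : T + T)).
  move=> w wc i; pose f (v : T + T) := w 0 (enum_rank v).
  have fe : forall a b, e a b -> f a = f b.
    by move=> a b eab; apply: wc; rewrite /EI !enum_rankK.
  have fl : forall x, f (inl x) = f (inl u0).
    move=> x; apply: (@connect_eqf _ _ g (fun t => f (inl t))); last exact: gconn x u0.
    by move=> a b gab; apply: fe.
  have fr : forall y, f (inr y) = f (inr v0).
    move=> y; apply: (@connect_eqf _ _ g (fun t => f (inr t))); last exact: gconn y v0.
    by move=> a b gab; apply: fe.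
  have flr : f (inl u0) = f (inr v0) by apply: fe.
  rewrite -(enum_valK i); case: (enum_val i) => [x|y]; first exact: fl x.
  by change (f (inr y) = f (inl u0)); rewrite fr flr.
rewrite /lambda2 -/e; split.
  rewrite ltNge sorted2_le // cnt; apply/negP => /card_gt1P [i [j [di dj ij]]].
  have [w [wn0 ws0 wq]] := courantA Pu LPd ij di dj.
  move: wq; rewrite rmorph0 mul0r => /(lap_const EIsym) wc.
  move: ws0; under eq_bigr => i' _ do rewrite (wconst w wc i').
  have N0 : (N != 0)%N by rewrite /N card_sum -lt0n addn_gt0 T0.
  rewrite sumr_const card_ord => /eqP; rewrite -mulr_natr mulf_eq0 pnatr_eq0.
  rewrite (negbTE N0) orbF => /eqP w0.
  by move: wn0; apply/negP/negPn/eqP/rowP => i'; rewrite wconst // w0 !mxE.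
pose Af (v : T + T) : R[i] := if v is inl _ then 1 else -1.
pose a : 'rV[R[i]]_N := \row_i Af (enum_val i).
pose b : 'rV[R[i]]_N := \row_i 1.
have Af2 : forall v, Af v * Af v = 1 by case=> ? /=; rewrite ?mulr1 ?mulrNN ?mulr1.
have AfJ : forall v, (Af v)^* = Af v by case=> ? /=; rewrite ?rmorphN rmorph1.
have sumA : \sum_i a 0 i = 0.
  under eq_bigr => i _ do rewrite mxE.
  rewrite (sum_enum_val Af) (big_sumType _ (fun _ => true)) /= sumrN.
  by rewrite subrr.
have sumE : \sum_x \sum_y (((x, y) \in E)%:R : R[i]) = k%:R.
  rewrite pair_big /= -natr_sum -Ek -sum1_card big_mkcond /=.
  congr (_%:R); rewrite [RHS]big_mkcond; apply: eq_bigr => -[x y] _ /=; by case: ((x, y) \in E).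
have S8 : \sum_i \sum_j (EI i j)%:R * ((a 0 i - a 0 j) * (a 0 i - a 0 j)) = (8 * k)%:R :> R[i].
  pose G u v := ((e u v)%:R : R[i]) * ((Af u - Af v) * (Af u - Af v)).
  transitivity (\sum_u \sum_v G u v).
    rewrite -(sum_enum_val (fun u => \sum_v G u v)); apply: eq_bigr => i _.
    rewrite -(sum_enum_val (G (enum_val i))).
    by apply: eq_bigr => j _; rewrite !mxE.
  rewrite (big_sumType _ (fun _ => true)) /=.
  under eq_bigr => x _ do rewrite (big_sumType _ (fun _ => true)) /=.
  under [X in _ + X]eq_bigr => x _ do rewrite (big_sumType _ (fun _ => true)) /=.
  rewrite /G /e /=.
  have c1 : (1 - 1) * (1 - 1) = 0 :> R[i] by rewrite subrr mul0r.
  have c4 : (-1 - -1) * (-1 - -1) = 0 :> R[i] by rewrite subrr mul0r.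
  have c2 : (1 - -1) * (1 - -1) = 4%:R :> R[i] by ring.
  have c3 : (-1 - 1) * (-1 - 1) = 4%:R :> R[i] by ring.
  rewrite c1 c2 c3 c4.
  under eq_bigr => x _ do rewrite -!mulr_suml mulr0 add0r.
  under [X in _ + X]eq_bigr => x _ do rewrite -!mulr_suml mulr0 addr0.
  rewrite -!mulr_suml [X in _ + X * _]exchange_big /= sumE -mulrDl -natrD -natrM.
  by congr (_%:R); rewrite mulnDl -mulnDr mulnC.
have indep : forall al be : R[i], al *: a + be *: b = 0 -> al = 0 /\ be = 0.
  move=> al be /rowP H.
  have h1 := H (enum_rank (inl u0)); have h2 := H (enum_rank (inr u0)).
  rewrite !mxE enum_rankK /= in h1; rewrite !mxE enum_rankK /= in h2.
  have be0 : be = 0.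
    have : 2 * be = (al * 1 + be * 1) + (al * -1 + be * 1) by ring.
    rewrite h1 h2 addr0 => /eqP; rewrite mulf_eq0 pnatr_eq0 /= => /eqP //.
  by split => //; move: h1; rewrite be0 mul0r addr0 mulr1.
have bound : forall al be : R[i], qf (lapmx R[i] EI) (al *: a + be *: b)
     <= real_complex R ((2 * k)%:R / #|T|%:R) * nrm (al *: a + be *: b).
  move=> al be; set w := al *: a + be *: b.
  have wE : forall i, w 0 i = al * Af (enum_val i) + be.
    by move=> i; rewrite !mxE mulr1.
  have conjB : forall x y : R[i], (x - y)^* = x^* - y^* by move=> x y; exact: rmorphB.
  have conjD : forall x y : R[i], (x + y)^* = x^* + y^* by move=> x y; exact: rmorphD.
  have conjM : forall x y : R[i], (x * y)^* = x^* * y^* by move=> x y; exact: rmorphM.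
  have wJ : forall i, (w 0 i)^* = al^* * Af (enum_val i) + be^*.
    by move=> i; rewrite wE conjD conjM AfJ.
  have hq : 2 * qf (lapmx R[i] EI) w = al * al^* * (8 * k)%:R.
    rewrite lap_form // -S8 mulr_sumr; apply: eq_bigr => i1 _.
    rewrite mulr_sumr; apply: eq_bigr => j1 _.
    rewrite conjB !wJ !wE !mxE; ring.
  have hn : nrm w = (N%:R) * (al * al^* + be * be^*).
    rewrite nrm_sum.
    transitivity (\sum_i ((al * al^* + be * be^*) + (al * be^* + be * al^*) * a 0 i)).
      apply: eq_bigr => i _; rewrite wJ wE mxE.
      have h := Af2 (enum_val i).
      transitivity (al * al^* * (Af (enum_val i) * Af (enum_val i)) + be * be^* +
         (al * be^* + be * al^*) * Af (enum_val i)); first ring.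
      by rewrite h mulr1.
    by rewrite big_split /= -mulr_sumr sumA mulr0 addr0 sumr_const card_ord mulr_natl.
  have n0 : (#|T|%:R : R[i]) != 0 by rewrite pnatr_eq0 -lt0n T0.
  rewrite -(@ler_pM2l _ 2) ?ltr0n // hq hn fmorph_div !rmorph_nat.
  have -> : 2 * ((2 * k)%:R / #|T|%:R * (N%:R * (al * al^* + be * be^*))) =
      (8 * k)%:R * (al * al^* + be * be^*) :> R[i].
    by rewrite /N card_sum natrD !natrM; field.
  rewrite mulrC mulrDr lerDl mulr_ge0 ?ler0n //.
  exact: mul_conjC_ge0.
rewrite sorted2_le // cnt.
apply: (courantB Pu LPd dR _ indep bound).
by apply/complex_realP; exists ((2 * k)%:R / #|T|%:R).
Qed.
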